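(* Let $G$ be a finitely generated group hyperbolic relative to a finite collection $\mathcal P$, $S$ a finite generating set, and $(\epsilon,R,D)$ thin-triangle constants. Let $U\subset V\cup W$ be a finite subset that is $6D$-convex with respect to some $b\in U$. Then for every $n\ge 7D$, the subgraph of the $n$-Rips graph $\Gamma_n$ induced on $U$ is dismantlable.
   Context: $\Gamma$ is the Cayley graph of $G$ w.r.t. $S$, $V=G$, $W$ the set of cosets $gP_\lambda$; relative hyperbolicity means the coned-off Cayley graph (vertex set $V\cup W$, edges of $\Gamma$ plus edges $(v,w)$ for $v\in w$) is fine and $\delta$-hyperbolic. $|\cdot,\cdot|_S$ is extended to $V\cup W$ via distances in $\Gamma$ between corresponding elements/cosets. $\Gamma_n$ has vertex set $V\cup W$ and an edge between $u\ne u'$ whenever $|u,u'|_S\le n$. For a geodesic edge-path $p=(p_j)_{j=0}^\ell$ in $\Gamma$, $p_i$ is $(\epsilon,R)$-deep in $w\in W$ if $R\le i\le\ell-R$ and $|p_j,w|_S\le\epsilon$ for all $|j-i|\le R$. A geodesic from $a$ to $b$ ($a,b\in V\cup W$) is a geodesic in $\Gamma$ of length $|a,b|_S$ starting at $a$ (if $a\in V$) or in $a$ (if $a\in W$), ending analogously at $b$; for $i>\ell$, $p_i:=p_\ell$. Positive integers $(\epsilon,R,D)$ are thin-triangle constants if: $D\ge\epsilon$; no vertex of a geodesic in $\Gamma$ is $(\epsilon,R)$-deep in two distinct cosets; and for all $a,b,c\in V\cup W$ with $a\ne b$, geodesics $p^{ab},p^{bc},p^{ac}$, $\ell=|a,b|_S$,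 $0\le i\le\ell$, with $z=w$ if $p^{ab}_i$ is $(\epsilon,R)$-deep in $w$ and $z=p^{ab}_i$ otherwise, we have $|z,p^{ac}_i|_S\le D$ or $|z,p^{bc}_{\ell-i}|_S\le D$. A subset $U\subset V\cup W$ is $\nu$-convex with respect to $u\in U$ if for every $u'\in U$, every geodesic $(p_j)_{j=0}^\ell$ from $u$ to $u'$ in $\Gamma$ and every $j\le\ell-\nu$: $p_j\in U$, and every $w\in W$ with $|w,p_j|_S\le\epsilon$ lies in $U$. In a graph, a vertex $a$ is dominated by an adjacent vertex $z\ne a$ if every vertex adjacent to $a$ is also adjacent to $z$. A finite graph is dismantlable if its vertices can be ordered $a_1,\ldots,a_k$ so that for each $i<k$, $a_i$ is dominated in the subgraph induced on $\{a_i,\ldots,a_k\}$. *)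

(* Defs.v *)
From Stdlib Require Import List Arith.
Import ListNotations.
Set Implicit Arguments.

Section Graph.
Variables (X : Type) (vt : X -> Prop) (adj : X -> X -> Prop).

(* x :: l is a walk (consecutive vertices adjacent); its length is length l *)
Fixpoint is_walk (x : X) (l : list X) : Prop :=
  match l with
  | [] => True
  | y :: l' => adj x y /\ is_walk y l'
  end.

Definition gdist_le (x y : X) (k : nat) : Prop :=
  exists l, is_walk x l /\ last l x = y /\ length l <= k.

Definition is_geod (x y : X) (l : list X) : Prop :=
  is_walk x l /\ last l x = y /\
  forall l', is_walk x l' -> last l' x = y -> length l <= length l'.

Definition graph_hyperbolic (delta : nat) : Prop :=
  (forall x y, vt x -> vt y -> exists l, is_walk x l /\ last l x = y) /\
  (forall x y z lxy lyz lxz, vt x -> vt y -> vt z ->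
     is_geod x y lxy -> is_geod y z lyz -> is_geod x z lxz ->
     forall v, In v (x :: lxy) ->
       exists w, (In w (y :: lyz) \/ In w (x :: lxz)) /\ gdist_le v w delta).

(* c = x :: c' is a circuit (simple cycle) x, c'..., back to x *)
Definition is_circuit (c : list X) : Prop :=
  match c with
  | [] => False
  | x :: c' => is_walk x (c' ++ [x]) /\ NoDup c /\ 3 <= length c
  end.

Definition circuit_has_edge (c : list X) (u v : X) : Prop :=
  match c with
  | [] => False
  | x :: c' => exists l1 l2, x :: c' ++ [x] = l1 ++ u :: v :: l2 \/
                             x :: c' ++ [x] = l1 ++ v :: u :: l2
  end.

Definition graph_fine : Prop :=
  forall u v, vt u -> vt v -> adj u v -> forall n,
    exists L : list (list X), forall c,
      is_circuit c -> length c = n -> circuit_has_edge c u v -> In c L.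

(* a is dominated by an adjacent z <> a in the subgraph induced on Y
   (closed-neighbourhood convention) *)
Definition dominated (Y : list X) (a z : X) : Prop :=
  In z Y /\ z <> a /\ adj a z /\
  forall x, In x Y -> adj a x -> x <> z -> adj z x.

Definition dismantlable (U : list X) : Prop :=
  exists ord : list X, NoDup ord /\ (forall x, In x ord <-> In x U) /\
    forall pre a rest, ord = pre ++ a :: rest -> rest <> [] ->
      exists z, dominated (a :: rest) a z.
End Graph.

Record setting := Setting {
  carrier :> Type;
  mul : carrier -> carrier -> carrier;
  inv : carrier -> carrier;
  one : carrier;
  gens : list carrier;
  parabolics : list (carrier -> Prop)
}.

Section Setting.
Variable X : setting.
Notation G := (carrier X).

Definition is_group : Prop :=
  (forall x y z : G, mul X x (mul X y z) = mul X (mul X x y) z) /\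
  (forall x : G, mul X (one X) x = x) /\ (forall x : G, mul X x (one X) = x) /\
  (forall x : G, mul X (inv X x) x = one X) /\ (forall x : G, mul X x (inv X x) = one X).

Definition is_subgroup (H : G -> Prop) : Prop :=
  H (one X) /\ (forall x y, H x -> H y -> H (mul X x y)) /\ (forall x, H x -> H (inv X x)).

Definition eval_word (w : list (G * bool)) : G :=
  fold_right (fun (sb : G * bool) (acc : G) => mul X (if snd sb then fst sb else inv X (fst sb)) acc) (one X) w.

Definition generates : Prop :=
  forall g : G, exists w, (forall sb, In sb w -> In (fst sb) (gens X)) /\ g = eval_word w.

Definition is_coset (C : G -> Prop) : Prop :=
  exists (g : G) (H : G -> Prop), @In (G -> Prop) H (parabolics X) /\
    forall x, C x <-> H (mul X (inv X g) x).

(* vertex set V \cup W: group elements and cosets (cosets as predicates) *)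
Inductive vtx : Type := VV (g : G) | WW (C : G -> Prop).

Definition valid (v : vtx) : Prop :=
  match v with VV _ => True | WW C => is_coset C end.

Definition pts (v : vtx) : G -> Prop :=
  match v with VV g => fun x => x = g | WW C => C end.

Definition cay (g h : G) : Prop :=
  exists s, In s (gens X) /\ (h = mul X g s \/ g = mul X h s).

Definition cay_path (l : nat) (p : nat -> G) : Prop :=
  forall i, i < l -> cay (p i) (p (i + 1)).

(* convention p_i := p_l for i > l *)
Definition pt (l : nat) (p : nat -> G) (i : nat) : G := p (Nat.min i l).

Definition path_from_to (u u' : vtx) (l : nat) (p : nat -> G) : Prop :=
  cay_path l p /\ pts u (p 0) /\ pts u' (p l).

Definition dle (u u' : vtx) (k : nat) : Prop :=
  exists l p, path_from_to u u' l p /\ l <= k.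

Definition geodesic (u u' : vtx) (l : nat) (p : nat -> G) : Prop :=
  path_from_to u u' l p /\ forall m q, path_from_to u u' m q -> l <= m.

Definition geodesic_edge_path (l : nat) (p : nat -> G) : Prop :=
  geodesic (VV (p 0)) (VV (p l)) l p.

Definition deep (eps R l : nat) (p : nat -> G) (i : nat) (C : G -> Prop) : Prop :=
  R <= i /\ i + R <= l /\
  forall j, j <= i + R -> i <= j + R -> dle (VV (p j)) (WW C) eps.

Definition thin_triangle_constants (eps R D : nat) : Prop :=
  0 < eps /\ 0 < R /\ 0 < D /\ eps <= D /\
  (forall l p i C1 C2, geodesic_edge_path l p -> i <= l ->
     is_coset C1 -> is_coset C2 -> deep eps R l p i C1 -> deep eps R l p i C2 ->
     C1 = C2) /\
  (forall a b c, valid a -> valid b -> valid c -> a <> b ->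
   forall l1 p1 l2 p2 l3 p3,
     geodesic a b l1 p1 -> geodesic b c l2 p2 -> geodesic a c l3 p3 ->
     forall i, i <= l1 ->
       (forall C, is_coset C -> deep eps R l1 p1 i C ->
          dle (WW C) (VV (pt l3 p3 i)) D \/ dle (WW C) (VV (pt l2 p2 (l1 - i))) D) /\
       ((forall C, is_coset C -> ~ deep eps R l1 p1 i C) ->
          dle (VV (p1 i)) (VV (pt l3 p3 i)) D \/
          dle (VV (p1 i)) (VV (pt l2 p2 (l1 - i))) D)).

Definition convex (eps nu : nat) (U : list vtx) (u : vtx) : Prop :=
  forall u', In u' U -> forall l p, geodesic u u' l p ->
    forall j, j + nu <= l ->
      In (VV (p j)) U /\
      (forall C, is_coset C -> dle (WW C) (VV (p j)) eps -> In (WW C) U).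

Definition coned_adj (u v : vtx) : Prop :=
  match u, v with
  | VV g, VV h => cay g h
  | VV g, WW C => is_coset C /\ C g
  | WW C, VV g => is_coset C /\ C g
  | WW _, WW _ => False
  end.

Definition rel_hyperbolic : Prop :=
  exists delta : nat,
    graph_fine valid coned_adj /\ graph_hyperbolic valid coned_adj delta.

Definition rips (n : nat) (u v : vtx) : Prop := u <> v /\ dle u v n.
End Setting.

Arguments VV {X} g.
Arguments WW {X} C.

(* Main.v *)
Require Import Defs.
From Stdlib Require Import List Arith.
From Stdlib Require Import Lia Classical ClassicalEpsilon Permutation.
Import ListNotations.

Section Sort.
Variable A : Type. Variable f : A -> nat.
Fixpoint ins (x : A) (l : list A) : list A :=
  match l with [] => [x] | y :: l' => if f y <=? f x then x :: y :: l' else y :: ins x l' end.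
Fixpoint isort (l : list A) : list A := match l with [] => [] | x :: l' => ins x (isort l') end.
Fixpoint dsorted (l : list A) : Prop :=
  match l with [] => True | x :: l' => (forall y, In y l' -> f y <= f x) /\ dsorted l' end.
Lemma ins_perm x l : Permutation (x :: l) (ins x l).
Proof. induction l as [|y l IH]; simpl; [auto|]. destruct (f y <=? f x); [auto|].
  eapply perm_trans; [apply perm_swap|]. apply perm_skip; auto. Qed.
Lemma isort_perm l : Permutation l (isort l).
Proof. induction l; simpl; auto. eapply perm_trans; [apply perm_skip; eauto| apply ins_perm]. Qed.
Lemma ins_sorted x l : dsorted l -> dsorted (ins x l).
Proof.
  induction l as [|y l IH]; simpl; intros Hs.
  - split; [intros _ []|exact I].
  - destruct Hs as [Hy Hl]. destruct (Nat.leb_spec (f y) (f x)).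
    + simpl. split; [|split; auto]. intros z [<-|Hz]; auto. specialize (Hy z Hz); lia.
    + simpl. split; [|apply IH; auto]. intros z Hz.
      apply (Permutation_in _ (Permutation_sym (ins_perm x l))) in Hz.
      destruct Hz as [<-|Hz]; [lia|auto].
Qed.
Lemma isort_sorted l : dsorted (isort l).
Proof. induction l; simpl; auto. apply ins_sorted; auto. Qed.
Lemma dsorted_split pre a rest : dsorted (pre ++ a :: rest) ->
  (forall x, In x pre -> f a <= f x) /\ (forall x, In x rest -> f x <= f a).
Proof.
  induction pre as [|y pre IH]; simpl; intros H.
  - split; [intros _ []| exact (proj1 H)].
  - destruct H as [Hy H]. destruct (IH H) as [H1 H2]. split; auto.
    intros x [<-|Hx]; auto. apply Hy. apply in_or_app; right; left; auto.
Qed.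
End Sort.

Lemma nat_min_ex (P : nat -> Prop) : (exists k, P k) -> exists k, P k /\ forall k', P k' -> k <= k'.
Proof.
  intros [k Hk]. revert Hk. induction k as [k IH] using (well_founded_induction lt_wf). intros Hk.
  destruct (classic (exists k', k' < k /\ P k')) as [[k' [Hlt Hk']]|Hn].
  - exact (IH k' Hlt Hk').
  - exists k. split; auto. intros k' Hk'. destruct (Nat.le_gt_cases k k'); auto. exfalso; apply Hn; eauto.
Qed.

Section Proof.
Variable X : setting.

Lemma cay_sym (g h : X) : cay X g h -> cay X h g.
Proof. intros [s [Hs [E|E]]]; exists s; split; auto. Qed.

Lemma path_rev l (p : nat -> X) : cay_path X l p -> cay_path X l (fun i => p (l - i)).
Proof.
  unfold cay_path; intros H i Hi. cbn beta.
  replace (l - i) with ((l - (i+1)) + 1) by lia.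
  apply cay_sym. apply H. lia.
Qed.

Lemma path_prefix l (p : nat -> X) j : cay_path X l p -> j <= l -> cay_path X j p.
Proof. unfold cay_path; intros H Hj i Hi; apply H; lia. Qed.

Lemma path_shift l (p : nat -> X) j : cay_path X l p -> j <= l -> cay_path X (l - j) (fun i => p (j + i)).
Proof. unfold cay_path; intros H Hj i Hi; cbn beta. replace (j + (i+1)) with ((j+i)+1) by lia. apply H; lia. Qed.

Lemma path_concat l1 (p : nat -> X) l2 q : cay_path X l1 p -> cay_path X l2 q -> q 0 = p l1 ->
  cay_path X (l1 + l2) (fun i => if i <=? l1 then p i else q (i - l1)).
Proof.
  unfold cay_path; intros H1 H2 E i Hi; cbn beta.
  destruct (Nat.leb_spec i l1); destruct (Nat.leb_spec (i+1) l1).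
  - apply H1; lia.
  - assert (i = l1) by lia. subst i. replace (l1 + 1 - l1) with (0+1) by lia. rewrite <- E. apply H2; lia.
  - lia.
  - replace (i + 1 - l1) with ((i - l1) + 1) by lia. apply H2; lia.
Qed.

Lemma dle_sym (u v : vtx X) k : dle u v k -> dle v u k.
Proof.
  intros [l [p [[Hp [H0 Hl]] Hk]]].
  exists l, (fun i => p (l - i)). split; [|exact Hk].
  split; [apply path_rev; exact Hp|]. cbn beta. rewrite Nat.sub_0_r, Nat.sub_diag. split; assumption.
Qed.

Lemma dle_mono (u v : vtx X) k k' : dle u v k -> k <= k' -> dle u v k'.
Proof. intros [l [p [H Hk]]] Hk'. exists l, p. split; [exact H|lia]. Qed.

Lemma dle_trans (u v : vtx X) (g : X) k1 k2 : dle u (VV g) k1 -> dle (VV g) v k2 -> dle u v (k1 + k2).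
Proof.
  intros [l1 [p [[Hp [Hp0 Hpl]] Hk1]]] [l2 [q [[Hq [Hq0 Hql]] Hk2]]].
  simpl in Hpl, Hq0.
  exists (l1 + l2), (fun i => if i <=? l1 then p i else q (i - l1)).
  split; [|lia]. split; [apply path_concat; auto; congruence|]. cbn beta.
  split.
  - rewrite (proj2 (Nat.leb_le 0 l1)) by lia. exact Hp0.
  - destruct (Nat.leb_spec (l1 + l2) l1).
    + assert (l2 = 0) by lia. subst l2. rewrite Nat.add_0_r. rewrite Hpl, <- Hq0. exact Hql.
    + replace (l1 + l2 - l1) with l2 by lia. exact Hql.
Qed.

Lemma dle_prefix (u v : vtx X) l p j : path_from_to u v l p -> j <= l -> dle u (VV (p j)) j.
Proof. intros [Hp [H0 Hl]] Hj. exists j, p. split; [|lia]. split; [eapply path_prefix; eauto|].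
  split; [exact H0|simpl; reflexivity]. Qed.

Lemma dle_suffix (u v : vtx X) l p j : path_from_to u v l p -> j <= l -> dle (VV (p j)) v (l - j).
Proof. intros [Hp [H0 Hl]] Hj. exists (l - j), (fun i => p (j + i)). split; [|lia].
  split; [apply path_shift; auto|]. cbn beta. rewrite Nat.add_0_r. split; [simpl; reflexivity|].
  replace (j + (l - j)) with l by lia. exact Hl. Qed.

Lemma geod_rev (u v : vtx X) l p : geodesic u v l p -> geodesic v u l (fun i => p (l - i)).
Proof.
  intros [[Hp [H0 Hl]] Hmin]. split.
  - split; [apply path_rev; auto|]. cbn beta. rewrite Nat.sub_0_r, Nat.sub_diag. auto.
  - intros m q [Hq [Hq0 Hqm]]. apply Hmin with (q := fun i => q (m - i)).
    split; [apply path_rev; auto|]. cbn beta. rewrite Nat.sub_0_r, Nat.sub_diag. auto.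
Qed.

Lemma geod_of_dle (u v : vtx X) k : dle u v k -> exists m p, geodesic u v m p /\ m <= k.
Proof.
  intros [l [p [Hp Hk]]].
  destruct (nat_min_ex (fun m => exists q, path_from_to u v m q)) as [m [[q Hq] Hmin]]; [eauto|].
  exists m, q. split; [split; [exact Hq| intros m' q' Hq'; apply Hmin; eauto]|].
  assert (m <= l) by (apply Hmin; eauto). lia.
Qed.

Hypothesis HG : is_group X.
Hypothesis Hgen : generates X.
Hypothesis Hsub : forall H, In H (parabolics X) -> is_subgroup X H.

Lemma word_path (w : list (X * bool)) : (forall sb, In sb w -> In (fst sb) (gens X)) ->
  forall g : X, exists l (p : nat -> X), cay_path X l p /\ p 0 = g /\ p l = mul X g (eval_word X w).
Proof.
  destruct HG as (Hassoc & H1l & H1r & Hinvl & Hinvr).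
  induction w as [|sb w IH]; intros Hw g.
  - exists 0, (fun _ => g). split; [intros i Hi; lia|]. split; [reflexivity|]. simpl. rewrite H1r; reflexivity.
  - set (s' := if snd sb then fst sb else inv X (fst sb)).
    destruct (IH (fun x H => Hw x (or_intror H)) (mul X g s')) as [l [q [Hq [Hq0 Hql]]]].
    exists (S l), (fun i => match i with 0 => g | S i' => q i' end).
    split; [|split; [reflexivity|]].
    + intros i Hi. destruct i as [|i'].
      * simpl. rewrite Hq0. assert (Hs: In (fst sb) (gens X)) by (apply Hw; left; auto).
        exists (fst sb). split; auto. unfold s'. destruct (snd sb). left; reflexivity. right.
        rewrite <- Hassoc, Hinvl, H1r. reflexivity.
      * simpl. apply Hq; lia.
    + simpl. rewrite Hql, <- Hassoc. reflexivity.
Qed.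

Lemma connect_pts (g h : X) : exists l (p : nat -> X), cay_path X l p /\ p 0 = g /\ p l = h.
Proof.
  destruct HG as (Hassoc & H1l & H1r & Hinvl & Hinvr).
  destruct (Hgen (mul X (inv X g) h)) as [w [Hw E]].
  destruct (word_path w Hw g) as [l [p [Hp [H0 Hl]]]].
  exists l, p. repeat split; auto. rewrite Hl, <- E, Hassoc, Hinvr, H1l. reflexivity.
Qed.

Lemma valid_pt (u : vtx X) : valid u -> exists g, pts u g.
Proof.
  destruct HG as (Hassoc & H1l & H1r & Hinvl & Hinvr).
  destruct u as [g|C]; simpl; intros Hv.
  - exists g; reflexivity.
  - destruct Hv as [g [H [Hin HC]]]. exists g. apply HC. rewrite Hinvl. apply (proj1 (Hsub H Hin)).
Qed.

Lemma dle_ex (u v : vtx X) : valid u -> valid v -> exists k, dle u v k.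
Proof.
  intros Hu Hv. destruct (valid_pt u Hu) as [g Hg], (valid_pt v Hv) as [h Hh].
  destruct (connect_pts g h) as [l [p [Hp [H0 Hl]]]].
  exists l, l, p. split; [|lia]. split; auto. split; [rewrite H0; auto| rewrite Hl; auto].
Qed.

Definition key (b u : vtx X) : nat :=
  epsilon (inhabits 0) (fun k => dle b u k /\ forall k', dle b u k' -> k <= k').

Lemma key_spec b u : valid b -> valid u -> dle b u (key b u) /\ forall k', dle b u k' -> key b u <= k'.
Proof. intros Hb Hu. unfold key. apply epsilon_spec. apply nat_min_ex. apply dle_ex; auto. Qed.

Lemma key_geod b u : valid b -> valid u -> exists p, geodesic b u (key b u) p.
Proof.
  intros Hb Hu. destruct (key_spec b u Hb Hu) as [[l [p [Hp Hl]]] Hmin].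
  assert (key b u <= l) by (apply Hmin; exists l, p; split; auto).
  assert (l = key b u) by lia. subst l.
  exists p. split; auto. intros m q Hq. apply Hmin. exists m, q; split; auto.
Qed.

Lemma key_self b : valid b -> key b b = 0.
Proof.
  intros Hb. destruct (valid_pt b Hb) as [g Hg].
  destruct (key_spec b b Hb Hb) as [_ Hmin].
  assert (dle b b 0) as H0.
  { exists 0, (fun _ => g). split; auto. split; [intros i Hi; lia| split; auto]. }
  specialize (Hmin 0 H0). lia.
Qed.

Lemma dominate (eps R D : nat) (U : list (vtx X)) (b : vtx X) (n : nat)
  (HT : thin_triangle_constants X eps R D) (HU : forall u, In u U -> valid u)
  (Hb : In b U) (Hconv : convex eps (6 * D) U b) (Hn : 7 * D <= n)
  (Y : list (vtx X)) (a : vtx X) (HaY : In a Y) (HYU : forall x, In x Y -> In x U)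
  (Hkey : forall x, In x Y -> key b x <= key b a)
  (Hclose : forall u, In u U -> key b u < key b a -> In u Y)
  (Hab : a <> b) (HbY : In b Y) : exists z, dominated (@rips X n) Y a z.
Proof.
  destruct HT as (Heps & HR & HD & HeD & Huniq & Hthin).
  assert (Hvb : valid b) by auto. assert (Hva : valid a) by auto.
  destruct (key_spec b a Hvb Hva) as [Hka Hkmin].
  destruct (le_gt_dec (key b a) n) as [Hle|Hgt].
  - exists b. unfold dominated, rips. split; [auto|]. split; [auto|]. split.
    + split; auto. apply dle_sym. apply dle_mono with (key b a); auto.
    + intros x Hx [Hax Hdx] Hxb. split; [intro E; apply Hxb; auto|].
      assert (Hvx : valid x) by auto.
      apply dle_mono with (key b x); [apply key_spec; auto|].
      specialize (Hkey x Hx). lia.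
  - set (l := key b a) in *.
    destruct (key_geod b a Hvb Hva) as [p Hgeo]. fold l in Hgeo.
    set (j := l - 6 * D).
    assert (Hj : j + 6 * D <= l) by (unfold j; lia).
    destruct (Hconv a (HYU a HaY) l p Hgeo j Hj) as [HpjU HCU].
    pose proof (geod_rev _ _ _ _ Hgeo) as Hgeo1.
    assert (Hbj : dle b (VV (p j)) j) by (apply (dle_prefix _ _ _ _ _ (proj1 Hgeo)); lia).
    assert (Hja : dle a (VV (p j)) (6 * D)).
    { apply dle_sym. replace (6 * D) with (l - j) by (unfold j; lia).
      apply (dle_suffix _ _ _ _ _ (proj1 Hgeo)); lia. }
    assert (Hx : forall x, In x Y -> rips n a x -> exists m p3 p2,
               geodesic a x m p3 /\ m <= n /\ geodesic b x (key b x) p2 /\ key b x <= l /\ valid x).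
    { intros x Hx [_ Hdx]. assert (Hvx : valid x) by auto.
      destruct (geod_of_dle _ _ _ Hdx) as [m [p3 [Hg3 Hm]]].
      destruct (key_geod b x Hvb Hvx) as [p2 Hg2].
      exists m, p3, p2. split; [exact Hg3|]. split; [exact Hm|]. split; [exact Hg2|]. split; [apply Hkey; exact Hx|exact Hvx]. }
    assert (Hfin : forall z x m p3 p2, geodesic a x m p3 -> m <= n ->
               geodesic b x (key b x) p2 -> key b x <= l ->
               dle z (VV (pt X m p3 (6 * D))) D \/ dle z (VV (pt X (key b x) p2 (l - 6 * D))) D ->
               dle z x n).
    { intros z x m p3 p2 Hg3 Hm Hg2 Hl2 [Hc|Hc]; unfold pt in Hc.
      - pose proof (dle_suffix _ _ _ _ (Nat.min (6 * D) m) (proj1 Hg3) (Nat.le_min_r _ _)) as Hs.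
        apply dle_mono with (D + (m - Nat.min (6 * D) m)); [eapply dle_trans; eauto| lia].
      - pose proof (dle_suffix _ _ _ _ (Nat.min (l - 6 * D) (key b x)) (proj1 Hg2) (Nat.le_min_r _ _)) as Hs.
        apply dle_mono with (D + (key b x - Nat.min (l - 6 * D) (key b x))); [eapply dle_trans; eauto| lia]. }
    assert (Hi : 6 * D <= l) by lia.
    destruct (classic (exists C, is_coset X C /\ deep X eps R l (fun i => p (l - i)) (6 * D) C))
      as [[C [HC Hdeep]]|Hnodeep].
    + assert (HjC : dle (VV (p j)) (WW C) eps).
      { destruct Hdeep as (_ & _ & Hd). apply (Hd (6 * D)); lia. }
      assert (HCin : In (WW C) U) by (apply HCU; auto; apply dle_sym; auto).
      assert (HkC : key b (WW C) < l).
      { destruct (key_spec b (WW C) Hvb (HU _ HCin)) as [_ Hm].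
        pose proof (Hm _ (dle_trans _ _ _ _ _ Hbj HjC)). unfold j in *; lia. }
      exists (WW C). unfold dominated. split; [apply Hclose; auto|].
      split; [intro E; rewrite E in HkC; lia|]. split.
      * split; [intro E; rewrite <- E in HkC; lia|].
        apply dle_mono with (6 * D + eps); [eapply dle_trans; eauto| lia].
      * intros x HxY Hrx Hxz. destruct (Hx x HxY Hrx) as [m [p3 [p2 (Hg3 & Hm & Hg2 & Hl2 & Hvx)]]].
        split; [intro E; apply Hxz; auto|].
        destruct (Hthin a b x Hva Hvb Hvx Hab l _ (key b x) p2 m p3 Hgeo1 Hg2 Hg3 (6 * D) Hi) as [H1 _].
        apply (Hfin (WW C) x m p3 p2); auto.
    + assert (Hkj : key b (VV (p j)) < l).
      { destruct (key_spec b (VV (p j)) Hvb (HU _ HpjU)) as [_ Hm].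
        pose proof (Hm _ Hbj). unfold j in *; lia. }
      exists (VV (p j)). unfold dominated. split; [apply Hclose; auto|].
      split; [intro E; rewrite E in Hkj; lia|]. split.
      * split; [intro E; rewrite <- E in Hkj; lia|].
        apply dle_mono with (6 * D); auto; lia.
      * intros x HxY Hrx Hxz. destruct (Hx x HxY Hrx) as [m [p3 [p2 (Hg3 & Hm & Hg2 & Hl2 & Hvx)]]].
        split; [intro E; apply Hxz; auto|].
        destruct (Hthin a b x Hva Hvb Hvx Hab l _ (key b x) p2 m p3 Hgeo1 Hg2 Hg3 (6 * D) Hi) as [_ H2].
        apply (Hfin (VV (p j)) x m p3 p2); auto.
        apply H2. intros C HC Hd. apply Hnodeep. eauto.
Qed.

End Proof.

Theorem lemma3p13 (X : setting) (eps R D : nat) (U : list (vtx X)) (b : vtx X) :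
  is_group X ->
  generates X ->
  (forall H, In H (parabolics X) -> is_subgroup X H) ->
  rel_hyperbolic X ->
  thin_triangle_constants X eps R D ->
  (forall u, In u U -> @valid X u) ->
  In b U ->
  @convex X eps (6 * D) U b ->
  forall n : nat, 7 * D <= n ->
    dismantlable (@rips X n) U.
Proof.
  intros HG Hgen Hsub Hrh HT HU Hb Hconv n Hn.
  assert (Hvb : valid b) by auto.
  set (eqdec := fun x y : vtx X => excluded_middle_informative (x = y)).
  set (F := filter (fun x => if eqdec x b then false else true) (nodup eqdec U)).
  set (L := isort _ (key X b) F).
  assert (HLF : forall x, In x L <-> In x F).
  { intros x; split; intro H.
    - exact (Permutation_in _ (Permutation_sym (isort_perm _ (key X b) F)) H).
    - exact (Permutation_in _ (isort_perm _ (key X b) F) H). }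
  assert (HF : forall x, In x F <-> In x U /\ x <> b).
  { intros x. unfold F. rewrite filter_In, nodup_In.
    destruct (eqdec x b); split; intros [H1 H2]; try discriminate; split; auto; congruence. }
  exists (L ++ [b]). split; [|split].
  - apply (Permutation_NoDup (Permutation_cons_append L b)). constructor.
    + intro H. apply HLF, HF in H. destruct H; congruence.
    + apply (Permutation_NoDup (isort_perm _ (key X b) F)). unfold F.
      apply NoDup_filter, NoDup_nodup.
  - intros x; split; intro H.
    + apply in_app_or in H. destruct H as [H|[<-|[]]]; auto. apply HLF, HF in H. tauto.
    + apply in_or_app. destruct (eqdec x b) as [->|Hne]; [right; left; auto|].
      left. apply HLF, HF. auto.
  - intros pre a rest Hord Hrest.
    destruct (exists_last Hrest) as [r' [y Hy]]. subst rest.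
    rewrite app_comm_cons, app_assoc in Hord.
    apply app_inj_tail in Hord. destruct Hord as [HL Hyb]. subst y.
    assert (HaL : In a L) by (rewrite HL; apply in_or_app; right; left; auto).
    assert (Hab : a <> b) by (apply HLF, HF in HaL; tauto).
    assert (Hs := dsorted_split _ (key X b) pre a r').
    rewrite <- HL in Hs. specialize (Hs (isort_sorted _ _ F)). destruct Hs as [Hpre Hr'].
    assert (HYsub : forall x, In x (a :: r' ++ [b]) -> In x U).
    { intros x Hx. destruct Hx as [<-|Hx].
      - apply HLF, HF in HaL; tauto.
      - apply in_app_or in Hx. destruct Hx as [Hx|[<-|[]]]; auto.
        assert (In x L) as HxL by (rewrite HL; apply in_or_app; right; right; auto).
        apply HLF, HF in HxL; tauto. }
    eapply (dominate X HG Hgen Hsub eps R D U b n HT HU Hb Hconv Hn); auto.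
    + left; auto.
    + intros x [<-|Hx]; auto. apply in_app_or in Hx. destruct Hx as [Hx|[<-|[]]]; auto.
      rewrite key_self; auto; lia.
    + intros u Hu Hk. destruct (eqdec u b) as [->|Hne].
      * right. apply in_or_app; right; left; auto.
      * assert (In u L) as HuL by (apply HLF, HF; auto). rewrite HL in HuL.
        apply in_app_or in HuL. destruct HuL as [Hp|[<-|Hr]].
        -- specialize (Hpre u Hp). lia.
        -- left; auto.
        -- right; apply in_or_app; left; auto.
    + right. apply in_or_app; right; left; auto.
Qed.
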